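(* For positive integers $n$ and $t$, the complete multipartite graph $K_{n\times t}$ (with $n$ parts each of size $t$) is integrable.
   Context: For a graph $G$ with adjacency matrix $A(G)$ and smallest eigenvalue $\theta_{\min}(G)$, $G$ is integrable if there is an integral matrix $N$ with $A(G)-\lfloor\theta_{\min}(G)\rfloor I=N^TN$. For $n\geq 2$, $K_{n\times t}$ is strongly regular with parameters $(nt,(n-1)t,(n-2)t,(n-1)t)$ and smallest eigenvalue $-t$. *)

(* Defs.v *)
From HB Require Import structures.
From mathcomp Require Import all_boot all_order all_algebra all_field.
Set Implicit Arguments. Unset Strict Implicit. Unset Printing Implicit Defensive.
Import Order.TTheory GRing.Theory Num.Theory.
Local Open Scope ring_scope.

Definition adjacency_mx (v : nat) (e : rel 'I_v) : 'M[int]_v :=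
  \matrix_(i, j) ((e i j : nat)%:Z).

Definition is_min_eigenvalue (v : nat) (A : 'M[int]_v) (theta : algC) : Prop :=
  eigenvalue (map_mx intr A) theta /\
  (forall mu : algC, eigenvalue (map_mx intr A) mu -> theta <= mu).

Definition integrable (v : nat) (e : rel 'I_v) : Prop :=
  exists theta : algC, is_min_eigenvalue (adjacency_mx e) theta /\
  exists (m : nat) (N : 'M[int]_(m, v)),
    adjacency_mx e - (Num.floor theta)%:M = N^T *m N.

(* Complete multipartite graph K_{n x t}: vertex k in 'I_(n*t) lies in part
   k %/ t; two vertices are adjacent iff they lie in different parts. *)
Definition K_multipartite (n t : nat) : rel 'I_(n * t) :=
  fun i j => (i %/ t)%N != (j %/ t)%N.
Arguments K_multipartite : clear implicits.

(* Main.v *)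
Require Import Defs.
From mathcomp Require Import all_boot all_order all_algebra all_field.
From mathcomp Require Import zify ring.
Set Implicit Arguments. Unset Strict Implicit. Unset Printing Implicit Defensive.
Import Order.TTheory GRing.Theory Num.Theory.

Lemma divn_eqP t k p : 0 < t -> (k %/ t == p) = (p * t <= k < p * t + t).
Proof.
move=> ht; rewrite eqn_leq leq_divRL // -ltnS ltn_divLR //.
by rewrite mulSn addnC andbC.
Qed.

Lemma count_part n t p : 0 < t -> p < n ->
  \sum_(k < n * t) (k %/ t == p : nat) = t.
Proof.
move=> ht hp.
rewrite -(big_mkord xpredT (fun k => (k %/ t == p) : nat)).
have h1 : 0 <= p * t by [].
have h2 : p * t <= p * t + t by rewrite leq_addr.
have h3 : p * t + t <= n * t by rewrite -mulSnr leq_mul2r hp orbT.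
rewrite (big_cat_nat h1 (leq_trans h2 h3)) /= (big_cat_nat h2 h3) /=.
rewrite big1_seq ?add0n; last first.
  move=> k /andP [_]; rewrite mem_iota => hk.
  rewrite divn_eqP //; have -> : (p * t <= k < p * t + t) = false by lia.
  by [].
rewrite [X in _ + X]big1_seq ?addn0; last first.
  move=> k /andP [_]; rewrite mem_iota => hk.
  rewrite divn_eqP //; have -> : (p * t <= k < p * t + t) = false by lia.
  by [].
rewrite (@eq_big_nat _ _ _ _ _ _ (fun _ => 1)) => [|i hi]; last by rewrite divn_eqP // hi.
rewrite sum_nat_const_nat; lia.
Qed.

Local Open Scope ring_scope.
Section Delta.
Variable v : nat.
Implicit Types (F : 'I_v -> 'I_v -> int) (G : 'I_v -> int).

Lemma sum_delta G i : \sum_k G k * (k == i)%:R = G i.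
Proof.
rewrite (bigD1 i) //= eqxx mulr1 big1 ?addr0 // => k /negbTE ->.
by rewrite mulr0.
Qed.

Lemma L1 F i : \sum_k1 \sum_k2 F k1 k2 * (k1 == i)%:R = \sum_k2 F i k2.
Proof.
rewrite -(sum_delta (fun k1 => \sum_k2 F k1 k2) i).
by apply: eq_bigr => k1 _; rewrite mulr_suml.
Qed.

Lemma L2 F i : \sum_k1 \sum_k2 F k1 k2 * (k2 == i)%:R = \sum_k1 F k1 i.
Proof.
rewrite exchange_big /= -(sum_delta (fun k2 => \sum_k1 F k1 k2) i).
by apply: eq_bigr => k2 _; rewrite mulr_suml.
Qed.

Lemma L3 F i j :
  \sum_k1 \sum_k2 F k1 k2 * ((k1 == i)%:R * (k2 == j)%:R) = F i j.
Proof.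
under eq_bigr do under eq_bigr do rewrite mulrA mulrAC.
by rewrite (L1 (fun k1 k2 => F k1 k2 * (k2 == j)%:R)) sum_delta.
Qed.
End Delta.
Lemma sum_normC_ge0 k (w : 'rV[algC]_k) :
  0 <= (w *m (map_mx Num.conj w)^T) 0 0.
Proof.
rewrite !mxE; apply: sumr_ge0 => j _; rewrite !mxE -normCK.
exact: exprn_ge0.
Qed.

Lemma sum_normC_gt0 k (w : 'rV[algC]_k) : w != 0 ->
  0 < (w *m (map_mx Num.conj w)^T) 0 0.
Proof.
move=> nz.
have [j Hj] : exists j, w 0 j != 0.
  apply/existsP; apply: contraR nz => /existsPn H.
  by apply/eqP/matrixP => i j; rewrite ord1 mxE; apply/eqP; move: (H j); rewrite negbK.
rewrite !mxE (bigD1 j) //= ltr_wpDr //.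
  by apply: sumr_ge0 => i _; rewrite !mxE -normCK; exact: exprn_ge0.
by rewrite !mxE -normCK exprn_gt0 // normr_gt0.
Qed.

Lemma min_eig_lemma v (A : 'M[int]_v) (c : int) m (N : 'M[int]_(m, v)) :
  A - c%:M = N^T *m N -> eigenvalue (map_mx intr A) (c%:~R : algC) ->
  is_min_eigenvalue A (c%:~R : algC).
Proof.
move=> HA Hc; split => // mu /eigenvalueP [x Hx nz].
have HB : map_mx (intr : int -> algC) A - (c%:~R : algC)%:M = (map_mx intr N)^T *m map_mx intr N.
  by rewrite map_trmx -map_mxM -HA map_mxB /= map_scalar_mx.
have conjN : map_mx Num.conj (map_mx (intr : int -> algC) N) = map_mx intr N.
  by apply/matrixP => i j; rewrite !mxE rmorph_int.
set xc := (map_mx Num.conj x)^T.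
have E1 : x *m (map_mx intr A - (c%:~R)%:M) *m xc = (mu - c%:~R) *: (x *m xc).
  by rewrite mulmxBr Hx mul_mx_scalar -scalerBl -scalemxAl.
have E2 : x *m (map_mx intr A - (c%:~R)%:M) *m xc =
   (x *m (map_mx intr N)^T) *m (map_mx Num.conj (x *m (map_mx intr N)^T))^T.
  rewrite HB mulmxA -mulmxA map_mxM trmx_mul -map_trmx trmxK /xc; congr (_ *m (_ *m _)); exact: esym conjN.
have := sum_normC_ge0 (x *m (map_mx intr N)^T); rewrite -E2 E1 mxE.
rewrite pmulr_lge0 ?subr_ge0 //.
exact: sum_normC_gt0.
Qed.

Lemma integrable_of v (e : rel 'I_v) (c : int) m (N : 'M[int]_(m, v)) :
  adjacency_mx e - c%:M = N^T *m N ->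
  eigenvalue (map_mx intr (adjacency_mx e)) (c%:~R : algC) -> integrable e.
Proof.
move=> HA Hc; exists c%:~R; split; first exact: min_eig_lemma HA Hc.
by exists m, N; rewrite intrKfloor.
Qed.

Definition sp t (k1 k2 : nat) : bool := (k1 < k2)%N && (k1 %/ t == k2 %/ t)%N.
Definition frow v t (x : 'I_v * 'I_v) (c : 'I_v) : int :=
  (sp t x.1 x.2)%:R * ((x.1 == c)%:R - (x.2 == c)%:R).
Definition N2 v t : 'M[int]_(#|{: 'I_v * 'I_v}|, v) :=
  \matrix_(r, c) frow t (enum_val r) c.
Definition Nmat v t := col_mx (const_mx 1 : 'M[int]_(1, v)) (N2 v t).

Lemma gram v t i j : ((Nmat v t)^T *m Nmat v t) i j =
  1 + \sum_k1 \sum_k2 frow t (k1, k2) i * frow t (k1, k2) j.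
Proof.
rewrite /Nmat tr_col_mx mul_row_col mxE; congr (_ + _).
  by rewrite !mxE big_ord1 !mxE mulr1.
rewrite !mxE pair_bigA /=.
rewrite [RHS](reindex (@enum_val (prod 'I_v 'I_v) xpredT)) /=; last first.
  exact: onW_bij (enum_val_bij _).
by apply: eq_bigr => r _; rewrite !mxE; case: (enum_val r).
Qed.

Lemma diag_term (b a1 a2 : bool) : ~~ [&& b, a1 & a2] ->
  (b%:R * (a1%:R - a2%:R)) * (b%:R * (a1%:R - a2%:R)) =
  b%:R * a1%:R + b%:R * a2%:R :> int.
Proof. by case: b; case: a1; case: a2. Qed.

Lemma off_term (b a1 a2 b1 b2 : bool) : ~~ (a1 && b1) -> ~~ (a2 && b2) ->
  ~~ [&& b, a1 & a2] -> ~~ [&& b, b1 & b2] ->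
  (b%:R * (a1%:R - a2%:R)) * (b%:R * (b1%:R - b2%:R)) =
  - (b%:R * (a1%:R * b2%:R)) - b%:R * (b1%:R * a2%:R) :> int.
Proof. by case: b; case: a1; case: a2; case: b1; case: b2. Qed.

Lemma sp_sym t (i k : nat) :
  (sp t i k)%:R + (sp t k i)%:R = ((k != i) && (k %/ t == i %/ t)%N)%:R :> int.
Proof.
rewrite /sp; case: (ltngtP i k) => h /=; rewrite ?addr0 ?add0r.
- by rewrite eq_sym.
- by [].
- by [].
Qed.

Lemma sum_diag v t (i : 'I_v) :
  \sum_k1 \sum_k2 frow t (k1, k2) i * frow t (k1, k2) i =
  \sum_(k : 'I_v) ((k %/ t == i %/ t)%N)%:R - 1.
Proof.
transitivity (\sum_(k1 : 'I_v) \sum_(k2 : 'I_v) ((sp t k1 k2)%:R * (k1 == i)%:R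
                              + (sp t k1 k2)%:R * (k2 == i)%:R) : int).
  apply: eq_bigr => k1 _; apply: eq_bigr => k2 _; rewrite /frow /= diag_term //.
  apply/and3P => [[/andP [lt _] /eqP e1 /eqP e2]].
  by rewrite e1 e2 ltnn in lt.
under eq_bigr do rewrite big_split /=.
rewrite big_split /=.
rewrite (L1 (fun k1 k2 => (sp t k1 k2)%:R)) (L2 (fun k1 k2 => (sp t k1 k2)%:R)).
rewrite -big_split /=.
under eq_bigr do rewrite sp_sym.
rewrite [X in _ = X - _](bigD1 i) //= eqxx addrAC subrr add0r (bigD1 i) //= eqxx /= add0r.
by apply: eq_bigr => k hk; rewrite hk.
Qed.

Lemma sum_off v t (i j : 'I_v) : i != j ->
  \sum_k1 \sum_k2 frow t (k1, k2) i * frow t (k1, k2) j =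
  - ((i %/ t == j %/ t)%N)%:R.
Proof.
move=> nij.
transitivity (\sum_(k1 : 'I_v) \sum_(k2 : 'I_v)
   (- ((sp t k1 k2)%:R * ((k1 == i)%:R * (k2 == j)%:R))
    - (sp t k1 k2)%:R * ((k1 == j)%:R * (k2 == i)%:R)) : int).
  apply: eq_bigr => k1 _; apply: eq_bigr => k2 _; rewrite /frow /= off_term //.
  - by apply/andP => [[/eqP e1 /eqP e2]]; rewrite -e1 e2 eqxx in nij.
  - by apply/andP => [[/eqP e1 /eqP e2]]; rewrite -e1 e2 eqxx in nij.
  - apply/and3P => [[/andP [lt _] /eqP e1 /eqP e2]].
    by rewrite e1 e2 ltnn in lt.
  - apply/and3P => [[/andP [lt _] /eqP e1 /eqP e2]].
    by rewrite e1 e2 ltnn in lt.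
under eq_bigr do rewrite sumrB sumrN.
rewrite sumrB sumrN.
rewrite (L3 (fun k1 k2 => (sp t k1 k2)%:R)) (L3 (fun k1 k2 => (sp t k1 k2)%:R)).
by rewrite -opprD addrC sp_sym nij.
Qed.

Lemma count_partR (R : pzSemiRingType) n t p : (0 < t)%N -> (p < n)%N ->
  \sum_(k < n * t) ((k %/ t == p)%N)%:R = t%:R :> R.
Proof. by move=> ht hp; rewrite -natr_sum count_part. Qed.

Lemma part_lt n t (i : 'I_(n * t)) : (0 < t)%N -> (i %/ t < n)%N.
Proof. by move=> ht; rewrite ltn_divLR. Qed.

Lemma case_ge2 n t : (1 < n)%N -> (0 < t)%N -> integrable (K_multipartite n t).
Proof.
move=> hn ht.
apply: (@integrable_of _ _ (- (t%:Z)) _ (Nmat (n * t) t)).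
- apply/matrixP => i j; rewrite gram !mxE /K_multipartite.
  case: (eqVneq i j) => [<-|nij].
  + rewrite sum_diag count_partR ?part_lt // eqxx /= mulr1n.
    by rewrite sub0r opprK addrC subrK natz.
  + rewrite sum_off // mulr0n subr0.
    by case: (i %/ t == j %/ t)%N.
apply/eigenvalueP.
exists (\row_(k < n * t) (((k %/ t == 0)%N)%:R - ((k %/ t == 1)%N)%:R : algC)).
  apply/rowP => j; rewrite !mxE.
  transitivity (\sum_(k < n * t) ((((k %/ t == 0)%N)%:R - ((k %/ t == 1)%N)%:R) -
      (((j %/ t == 0)%N)%:R * ((k %/ t == j %/ t)%N)%:R
       - ((j %/ t == 1)%N)%:R * ((k %/ t == j %/ t)%N)%:R)) : algC).
    apply: eq_bigr => k _; rewrite !mxE /K_multipartite.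
    case: (eqVneq (k %/ t)%N (j %/ t)%N) => [->|ne] /=.
      by rewrite mulr0z mulr0 !mulr1 subrr.
    by rewrite mulr1z mulr1 !mulr0 subrr subr0.
  rewrite sumrB !sumrB -!mulr_sumr !count_partR ?part_lt ?(ltnW hn) //.
  by rewrite mulrNz -pmulrn; ring.
have h0 : (0 < n * t)%N by rewrite muln_gt0 ht (ltnW hn).
apply/eqP => /rowP /(_ (Ordinal h0)); rewrite !mxE /= div0n /=.
by move/eqP; rewrite subr0 oner_eq0.
Qed.

Lemma case_1 t : (0 < t)%N -> integrable (K_multipartite 1 t).
Proof.
move=> ht.
have A0 : adjacency_mx (K_multipartite 1 t) = 0.
  apply/matrixP => i j; rewrite !mxE /K_multipartite.
  have hi : (i < t)%N by move: (ltn_ord i); rewrite [X in (_ < X)%N]mul1n.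
  have hj : (j < t)%N by move: (ltn_ord j); rewrite [X in (_ < X)%N]mul1n.
  by rewrite (divn_small hi) (divn_small hj).
apply: (@integrable_of _ _ 0 0 (0 : 'M[int]_(0, 1 * t))).
  by rewrite A0 (_ : 0%:M = 0) ?subr0 ?trmx0 ?mul0mx //; apply/matrixP => i j; rewrite !mxE mul0rn.
apply/eigenvalueP; exists (const_mx 1).
  by rewrite A0 map_mx0 mulmx0 mulr0z scale0r.
have h0 : (0 < 1 * t)%N by rewrite mul1n.
apply/eqP => /rowP /(_ (Ordinal h0)); rewrite !mxE.
by move/eqP; rewrite oner_eq0.
Qed.

Theorem mainTheorem4 (n t : nat) (hn : (0 < n)%N) (ht : (0 < t)%N) :
  integrable (K_multipartite n t).
Proof.
case: n hn => [//|[|n']] _.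
  exact: case_1.
exact: case_ge2.
Qed.
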